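(* Let $G+H$ and $G'+H'$ be mixed graphs built from supply graphs $G,G'$ and demand digraphs $H,H'$, such that $G'+H'$ is a minor of $G+H$. Suppose there exist, for $(G',H')$, a measurable partition of the population by OD-pairs, an assignment of cost functions, and two strict equilibria inducing different flows on some arc. Then $(G,H)$ does not have the uniqueness property.
   Context: A supply graph is a finite undirected graph $G=(V,E)$ (parallel edges allowed), with directed version replacing each edge by two opposite arcs; a demand digraph is a simple digraph $H=(T,L)$ with $T\subseteq V$, arcs being OD-pairs; $G+H$ denotes the mixed graph $(V,E,L)$. A minor of a mixed graph is obtained by taking a sub-mixed-graph (subsets of vertices, edges and arcs) and contracting some of its edges (deleting an edge and identifying its endpoints). Routes for $(o,d)\in L$ are directed $(o,d)$-paths in the directed version of $G$. Users form a bounded interval with Lebesgue measure, partitioned measurably by OD-pair; a strategy profile assigns measurably to each user a route of his OD-pair; flows are measures of users using each arc; each user has nonnegative continuous strictly increasing arc cost functions (measurable in the user); an equilibrium is a profile where every user takes a minimal-cost route; it is strict if every user has a unique minimal-cost route. $(G,H)$ has the uniqueness property if for every measurable partition of users into OD-pairs and every such cost assignment, the flow on each arc is the same in all equilibria. *)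

(* Defs.v *)
From HB Require Import structures.
From mathcomp Require Import all_boot all_order all_algebra.
From mathcomp Require Import all_classical all_reals all_analysis.
Set Implicit Arguments. Unset Strict Implicit. Unset Printing Implicit Defensive.
Import Order.TTheory GRing.Theory Num.Theory.
Import numFieldNormedType.Exports.
Local Open Scope classical_set_scope.
Local Open Scope ring_scope.

(* A supply graph G = (V,E) is a finite undirected multigraph: V, E    *)
(* finite types, [ends e] the (unordered) pair of endpoints of e; the  *)
(* order inside the pair is irrelevant (see the minor definition).     *)
(* A demand digraph H = (T,L) is a simple digraph on a subset of V:    *)
(* it is given by its arc set L : {set V * V} (no parallel arcs by     *)
(* construction), with no loops.                                       *)

Definition simple_demand (V : finType) (L : {set V * V}) : Prop :=
  forall v : V, (v, v) \notin L.

(* Directed version of G: each edge e gives the arcs (e,true) : e.1 -> e.2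
   and (e,false) : e.2 -> e.1. *)
Definition darc (E : finType) : finType := (E * bool)%type.

Definition dsrc (V E : finType) (ends : E -> V * V) (x : darc E) : V :=
  if x.2 then (ends x.1).1 else (ends x.1).2.
Definition ddst (V E : finType) (ends : E -> V * V) (x : darc E) : V :=
  if x.2 then (ends x.1).2 else (ends x.1).1.

Fixpoint dwalk (V E : finType) (ends : E -> V * V) (o : V) (p : seq (darc E))
  : bool :=
  if p is x :: p' then (dsrc ends x == o) && dwalk ends (ddst ends x) p'
  else true.

Definition is_route (V E : finType) (ends : E -> V * V) (o d : V)
  (p : seq (darc E)) : bool :=
  [&& dwalk ends o p, last o [seq ddst ends x | x <- p] == d &
      uniq (o :: [seq ddst ends x | x <- p])].

(* G'+H' is a minor of G+H: one takes a sub-mixed-graph (VS, ES, AS)   *)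
(* of G+H (every kept edge/arc has its endpoints in VS) and contracts  *)
(* a set C of its edges, i.e. deletes the edges of C and identifies    *)
(* the endpoints of each of them; the result is isomorphic to G'+H'.   *)

Definition contr_rel (V E : finType) (ends : E -> V * V) (C : {set E}) : rel V :=
  fun x y => [exists e in C, (ends e == (x, y)) || (ends e == (y, x))].

Definition is_minor
  (V E : finType) (ends : E -> V * V) (L : {set V * V})
  (V' E' : finType) (ends' : E' -> V' * V') (L' : {set V' * V'}) : Prop :=
  exists (VS : {set V}) (ES : {set E}) (AS : {set V * V}) (C : {set E})
         (pi : V -> V') (beta : E' -> E),
  [/\
      (forall e, e \in ES -> ((ends e).1 \in VS) && ((ends e).2 \in VS)),
      AS \subset L,
      (forall l, l \in AS -> (l.1 \in VS) && (l.2 \in VS)) &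
      C \subset ES] /\
  [/\ (forall x y, x \in VS -> y \in VS ->
         (pi x = pi y <-> connect (contr_rel ends C) x y)) &
      (forall v' : V', exists2 v, v \in VS & pi v = v')] /\
  [/\ injective beta,
      (forall e, e \in ES :\: C -> exists e', beta e' = e),
      (forall e', beta e' \in ES :\: C) &
      (forall e', ends' e' = (pi (ends (beta e')).1, pi (ends (beta e')).2)
               \/ ends' e' = (pi (ends (beta e')).2, pi (ends (beta e')).1))] /\
  [/\ {in AS &, injective (fun l : V * V => (pi l.1, pi l.2))} &
      L' = imset (fun l : V * V => (pi l.1, pi l.2)) (mem AS)].

Section Game.
Context {R : realType}.
Notation U := (measurableTypeR R).

Definition users (a b : R) : set R := [set u | a <= u <= b].

Definition od_partition (V : finType) (L : {set V * V}) (a b : R)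
  (od : R -> V * V) : Prop :=
  (forall u, users a b u -> od u \in L) /\
  (forall l : V * V, measurable ([set u | users a b u /\ od u = l] : set U)).

(* cost assignment: c u x t = cost for user u of arc x when its flow is t *)
Definition cost_assignment (E : finType) (a b : R)
  (c : R -> darc E -> R -> R) : Prop :=
  [/\ (forall u x t, users a b u -> 0 <= t -> 0 <= c u x t),
      (forall u x, users a b u ->
          {within [set t : R | 0 <= t], continuous (c u x)}),
      (forall u x t s, users a b u -> 0 <= t -> t < s -> c u x t < c u x s) &
      (forall x t, 0 <= t -> measurable_fun (users a b : set U) (fun u : U => c u x t))].

Definition strategy_profile (V E : finType) (ends : E -> V * V) (a b : R)
  (od : R -> V * V) (sigma : R -> seq (darc E)) : Prop :=
  (forall u, users a b u -> is_route ends (od u).1 (od u).2 (sigma u)) /\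
  (forall p : seq (darc E),
      measurable ([set u | users a b u /\ sigma u = p] : set U)).

Definition flow (E : finType) (a b : R) (sigma : R -> seq (darc E)) (x : darc E)
  : R :=
  fine (lebesgue_measure ([set u | users a b u /\ x \in sigma u] : set U)).

Definition route_cost (E : finType) (a b : R) (c : R -> darc E -> R -> R)
  (sigma : R -> seq (darc E)) (u : R) (p : seq (darc E)) : R :=
  \sum_(x <- p) c u x (flow a b sigma x).

Definition equilibrium (V E : finType) (ends : E -> V * V) (a b : R)
  (od : R -> V * V) (c : R -> darc E -> R -> R) (sigma : R -> seq (darc E))
  : Prop :=
  strategy_profile ends a b od sigma /\
  forall u, users a b u -> forall q, is_route ends (od u).1 (od u).2 q ->
    route_cost a b c sigma u (sigma u) <= route_cost a b c sigma u q.

Definition strict_equilibrium (V E : finType) (ends : E -> V * V) (a b : R)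
  (od : R -> V * V) (c : R -> darc E -> R -> R) (sigma : R -> seq (darc E))
  : Prop :=
  equilibrium ends a b od c sigma /\
  forall u, users a b u -> forall q, is_route ends (od u).1 (od u).2 q ->
    route_cost a b c sigma u q <= route_cost a b c sigma u (sigma u) ->
    q = sigma u.

Definition uniqueness_property (V E : finType) (ends : E -> V * V)
  (L : {set V * V}) (a b : R) : Prop :=
  forall (od : R -> V * V) (c : R -> darc E -> R -> R),
    od_partition L a b od -> cost_assignment a b c ->
    forall sigma1 sigma2,
      equilibrium ends a b od c sigma1 -> equilibrium ends a b od c sigma2 ->
      forall x, flow a b sigma1 x = flow a b sigma2 x.

End Game.

(* Main.v *)
Require Import Defs.
From HB Require Import structures.
From mathcomp Require Import all_boot all_order all_algebra.
From mathcomp Require Import all_classical all_reals all_analysis.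
From mathcomp Require Import zify ring lra.
Set Implicit Arguments. Unset Strict Implicit. Unset Printing Implicit Defensive.
Import Order.TTheory GRing.Theory Num.Theory.

Section Walks.
Variables (V E : finType) (ends : E -> V * V).
Local Notation src := (dsrc ends).
Local Notation dst := (ddst ends).
Local Notation vend o p := (last o [seq ddst ends x | x <- p]).

Lemma dwalk_cat o p1 p2 :
  dwalk ends o (p1 ++ p2) = dwalk ends o p1 && dwalk ends (vend o p1) p2.
Proof. by elim: p1 o => [|x p IH] o //=; rewrite IH andbA. Qed.

Lemma vend_cat o p1 p2 : vend o (p1 ++ p2) = vend (vend o p1) p2.
Proof. by rewrite map_cat last_cat. Qed.

Lemma last_take_nth (T : Type) (x0 : T) (m : seq T) k :
  (k < size m)%N -> last x0 (take k.+1 m) = nth x0 m k.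
Proof.
elim: m x0 k => [|y m IH] x0 [|k] //= hk; first by rewrite take0.
by rewrite IH // (set_nth_default x0).
Qed.

Lemma cut_loop o w : dwalk ends o w -> ~~ uniq (o :: [seq dst x | x <- w]) ->
  exists w1 w2 w3, [/\ w = w1 ++ w2 ++ w3, w2 != [::] &
                      vend (vend o w1) w2 = vend o w1].
Proof.
elim: w o => [|x w IH] o //=.
move=> /andP[/eqP hs hw]; rewrite negb_and negbK => /orP[ho|hu].
- set m := dst x :: [seq dst y | y <- w] in ho.
  set k := index o m.
  have hk : (k < size m)%N by rewrite index_mem.
  exists [::], (take k.+1 (x :: w)), (drop k.+1 (x :: w)); split => //=.
  + by rewrite cat_take_drop.
  + rewrite /= map_take -/m.
    change (last o (take k.+1 m) = o).
    by rewrite last_take_nth // nth_index.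
- have [w1 [w2 [w3 [-> h2 h3]]]] := IH _ hw hu.
  by exists (x :: w1), w2, w3.
Qed.

Lemma dwalk_cut o w1 w2 w3 :
  dwalk ends o (w1 ++ w2 ++ w3) -> vend (vend o w1) w2 = vend o w1 ->
  dwalk ends o (w1 ++ w3) /\ vend o (w1 ++ w3) = vend o (w1 ++ w2 ++ w3).
Proof.
rewrite !dwalk_cat => /and3P[h1 h2 h3] he.
rewrite he in h3; rewrite !vend_cat he; split => //.
by rewrite h1.
Qed.

Lemma simplify (P : seq (darc E) -> Prop) o w :
  (forall w1 w2 w3, dwalk ends o (w1 ++ w2 ++ w3) -> w2 != [::] ->
     vend (vend o w1) w2 = vend o w1 -> P (w1 ++ w2 ++ w3) -> P (w1 ++ w3)) ->
  dwalk ends o w -> P w ->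
  exists r, [/\ is_route ends o (vend o w) r, P r & (r = w \/ (size r < size w)%N)].
Proof.
move=> hP; have [n] := ubnP (size w); elim: n w => // n IH w hn hw pw.
case: (boolP (uniq (o :: [seq dst x | x <- w]))) => hu.
  by exists w; split => //; [rewrite /is_route hw eqxx hu | left].
have [w1 [w2 [w3 [ew h2 h3]]]] := cut_loop hw hu.
subst w.
have [hw' he] := dwalk_cut hw h3.
have hs : (size (w1 ++ w3) < size (w1 ++ w2 ++ w3))%N.
  by rewrite !size_cat ltn_add2l -[X in (X < _)%N]add0n ltn_add2r lt0n size_eq0.
have [r [hr pr hsz]] := IH (w1 ++ w3) (leq_trans hs hn) hw' (hP _ _ _ hw h2 h3 pw).
exists r; split => //; first by rewrite -he.
right; case: hsz => [->|h] //; exact: ltn_trans h hs.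
Qed.

Lemma route_uniq o d p : is_route ends o d p -> uniq p.
Proof.
by case/and3P => _ _ /= /andP[_ /map_uniq].
Qed.

Lemma route_size o d p : is_route ends o d p -> (size p <= #|darc E|)%N.
Proof.
move=> /route_uniq hu; rewrite -(card_uniqP hu); exact: max_card.
Qed.

Lemma dwalk_mem_src o q x : dwalk ends o q -> x \in q ->
  src x = o \/ src x \in [seq dst y | y <- q].
Proof.
elim: q o => [|y q IH] o //= /andP[/eqP hs hw]; rewrite in_cons => /orP[/eqP->|hx].
  by left.
right; case: (IH _ hw hx) => [->|h]; rewrite in_cons ?eqxx //.
by rewrite h orbT.
Qed.

Lemma route_eq_mem o q1 q2 : dwalk ends o q1 -> dwalk ends o q2 ->
  uniq (o :: [seq dst x | x <- q1]) -> uniq (o :: [seq dst x | x <- q2]) ->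
  q1 =i q2 -> q1 = q2.
Proof.
elim: q1 o q2 => [|x1 r1 IH] o [|x2 r2] //=.
- by move=> _ _ _ _ /(_ x2); rewrite in_cons eqxx.
- by move=> _ _ _ _ /(_ x1); rewrite in_cons eqxx.
move=> /andP[/eqP h1 w1] /andP[/eqP h2 w2] /andP[u1 u1'] /andP[u2 u2'] he.
have ex : x1 = x2.
  apply/eqP/negPn/negP => hne.
  have : x1 \in r2 by move: (he x1); rewrite !in_cons eqxx (negbTE hne) /= => <-.
  move=> hx; case: (dwalk_mem_src w2 hx) => hs.
    by move: u2; rewrite in_cons -h1 -hs eqxx.
  by move: u2; rewrite in_cons -h1 hs orbT.
subst x2; congr (_ :: _).
have hr1 : uniq r1 by move: u1' => /= /andP[_ /map_uniq].
have hr2 : uniq r2 by move: u2' => /= /andP[_ /map_uniq].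
have nx1 : x1 \notin r1.
  apply/negP => hx; move: u1' => /= /andP[/negP hn _]; apply: hn.
  by apply/mapP; exists x1.
have nx2 : x1 \notin r2.
  apply/negP => hx; move: u2' => /= /andP[/negP hn _]; apply: hn.
  by apply/mapP; exists x1.
apply: (IH (dst x1)) => // y.
case: (eqVneq y x1) => [->|hy]; first by rewrite (negbTE nx1) (negbTE nx2).
by move: (he y); rewrite !in_cons (negbTE hy).
Qed.

End Walks.

Fixpoint allseqs (T : finType) (n : nat) : seq (seq T) :=
  if n is n'.+1 then [::] :: [seq x :: s | x <- enum T, s <- allseqs T n']
  else [:: [::]].

Lemma mem_allseqs (T : finType) n (s : seq T) : (size s <= n)%N -> s \in allseqs T n.
Proof.
elim: n s => [|n IH] [|x s] //= hs.
rewrite in_cons /=; apply/allpairsP; exists (x, s); split => //.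
  by rewrite mem_enum.
exact: IH.
Qed.

Lemma pow2_sum_lt n (A : pred 'I_n) :
  (\sum_(i < n) (if A i then 2 ^ i else 0) < 2 ^ n)%N.
Proof.
elim: n A => [|n IH] A; first by rewrite big_ord0.
rewrite big_ord_recr /=.
have := IH (fun i => A (widen_ord (leqnSn n) i)).
rewrite expnS mul2n -addnn; case: (A ord_max) => /= h.
  by rewrite ltn_add2r.
by rewrite addn0 ltn_addr.
Qed.

Lemma pow2_inj n (A B : pred 'I_n) :
  \sum_(i < n) (if A i then 2 ^ i else 0) = \sum_(i < n) (if B i then 2 ^ i else 0) ->
  A =1 B.
Proof.
elim: n A B => [|n IH] A B; first by move=> _ [].
rewrite !big_ord_recr /= => H.
have ha : (\sum_(i < n) (if A (widen_ord (leqnSn n) i) then 2 ^ i else 0) < 2 ^ n)%N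
  := pow2_sum_lt (fun i => A (widen_ord (leqnSn n) i)).
have hb : (\sum_(i < n) (if B (widen_ord (leqnSn n) i) then 2 ^ i else 0) < 2 ^ n)%N
  := pow2_sum_lt (fun i => B (widen_ord (leqnSn n) i)).
have hm : A ord_max = B ord_max.
  move: H; case: (A ord_max); case: (B ord_max) => //= H; exfalso.
  - have h2 := eq_leq H; rewrite addn0 in h2.
    have h3 := leq_trans (leq_addl _ _) h2.
    by move: hb; rewrite ltnNge; move/negP; apply; exact: h3.
  - have h2 := eq_leq (esym H); rewrite addn0 in h2.
    have h3 := leq_trans (leq_addl _ _) h2.
    by move: ha; rewrite ltnNge; move/negP; apply; exact: h3.
move: H; rewrite hm => /addIn H.
have IH' := IH (fun i => A (widen_ord (leqnSn n) i)) (fun i => B (widen_ord (leqnSn n) i)) H.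
move=> [i Hi].
have [Ei|Hi'] : i = n \/ (i < n)%N.
  by move: (Hi); rewrite ltnS leq_eqVlt => /orP[/eqP|]; [left|right].
  have -> : Ordinal Hi = ord_max by apply/val_inj.
  exact: hm.
have := IH' (Ordinal Hi'); rewrite /=.
by have -> : widen_ord (leqnSn n) (Ordinal Hi') = Ordinal Hi by apply/val_inj.
Qed.

Lemma argmin_ex (T : Type) (P : T -> Prop) (f : T -> nat) :
  (exists x, P x) -> exists x, P x /\ forall y, P y -> (f x <= f y)%N.
Proof.
move=> [x px]; have [n] := ubnP (f x); elim: n x px => // n IH x px hn.
have [[y [py hy]]|hno] := pselect (exists y, P y /\ (f y < f x)%N).
  apply: (IH y py); exact: leq_trans hy hn.
exists x; split => // y py; rewrite leqNgt; apply/negP => hy; apply: hno.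
by exists y.
Qed.

Section Lift.
Variables (V E V' E' : finType) (ends : E -> V * V) (ends' : E' -> V' * V').
Variables (VS : {set V}) (ES : {set E}) (C : {set E}) (pi : V -> V') (beta : E' -> E).
Hypothesis hES : forall e, e \in ES -> ((ends e).1 \in VS) && ((ends e).2 \in VS).
Hypothesis hC : C \subset ES.
Hypothesis hpi : forall x y, x \in VS -> y \in VS ->
  (pi x = pi y <-> connect (contr_rel ends C) x y).
Hypothesis hbinj : injective beta.
Hypothesis hbES : forall e', beta e' \in ES :\: C.
Hypothesis hends' : forall e',
  ends' e' = (pi (ends (beta e')).1, pi (ends (beta e')).2) \/
  ends' e' = (pi (ends (beta e')).2, pi (ends (beta e')).1).

Local Notation src := (dsrc ends).
Local Notation dst := (ddst ends).
Local Notation src' := (dsrc ends').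
Local Notation dst' := (ddst ends').
Local Notation vend o p := (last o [seq ddst ends x | x <- p]).

Definition sgn e' : bool := ends' e' == (pi (ends (beta e')).1, pi (ends (beta e')).2).
Definition barc (x' : darc E') : darc E := (beta x'.1, x'.2 == sgn x'.1).
Definition unb (x : darc E) : option (darc E') :=
  if [pick e' | beta e' == x.1] is Some e' then Some (e', x.2 == sgn e') else None.
Definition isC (x : darc E) : bool := x.1 \in C.
Definition nonhuge x := (unb x != None) || isC x.
Definition proj (q : seq (darc E)) := pmap unb q.

Lemma unb_barc x' : unb (barc x') = Some x'.
Proof.
rewrite /unb /barc /=; case: pickP => [e' /eqP he|h]; last by move: (h x'.1); rewrite eqxx.
have {}he := hbinj he; subst e'.
by case: x' => e b /=; case: b; case: (sgn e).
Qed.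

Lemma unb_some x x' : unb x = Some x' -> x = barc x'.
Proof.
rewrite /unb; case: pickP => // e' /eqP he [<-].
rewrite /barc /=; case: x he => e b /= ->.
by case: b; case: (sgn e').
Qed.

Lemma unb_C x : isC x -> unb x = None.
Proof.
rewrite /unb /isC; case: pickP => // e' /eqP he hx.
by have := hbES e'; rewrite !inE he hx.
Qed.

Lemma ends_barc x' : src' x' = pi (src (barc x')) /\ dst' x' = pi (dst (barc x')).
Proof.
case: x' => e b; rewrite /barc /dsrc /ddst /= /sgn.
have [He|hne] := eqVneq (ends' e) (pi (ends (beta e)).1, pi (ends (beta e)).2).
  by rewrite He; case: b.
case: (hends' e) => He; first by rewrite He eqxx in hne.
by rewrite He; case: b.
Qed.

Lemma barc_VS x' : src (barc x') \in VS /\ dst (barc x') \in VS.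
Proof.
have := hbES x'.1; rewrite !inE => /andP[_ /hES /andP[h1 h2]].
by rewrite /dsrc /ddst /=; case: (_ == _).
Qed.

Lemma C_VS x : isC x -> src x \in VS /\ dst x \in VS.
Proof.
move=> hx; have /hES /andP[h1 h2] := fintype.subsetP hC _ hx.
by rewrite /dsrc /ddst; case: (x.2).
Qed.

Lemma C_pi x : isC x -> pi (src x) = pi (dst x).
Proof.
move=> hx; have [h1 h2] := C_VS hx.
apply/(hpi h1 h2); apply: connect1; rewrite /contr_rel; apply/existsP; exists x.1.
have hx' : x.1 \in C := hx.
rewrite hx' /=; rewrite /dsrc /ddst; case: (x.2).
  by rewrite -surjective_pairing eqxx.
by rewrite -surjective_pairing eqxx orbT.
Qed.

Lemma proj_walk q v : dwalk ends v q -> all nonhuge q ->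
  dwalk ends' (pi v) (proj q) /\
  last (pi v) [seq dst' x | x <- proj q] = pi (vend v q).
Proof.
elim: q v => [|x q IH] v //= /andP[/eqP hs hw] /andP[hn ha].
rewrite /proj /=; case E1: (unb x) => [x'|] /=.
- have ex := unb_some E1; have [e1 e2] := ends_barc x'.
  have [h1 h2] := IH _ hw ha.
  rewrite e1 -ex hs eqxx /= e2 -ex; split => //.
- have hc : isC x by move: hn; rewrite /nonhuge E1.
  have [h1 h2] := IH _ hw ha.
  by rewrite -hs C_pi //; split.
Qed.

Lemma mem_proj x' q : (x' \in proj q) = (barc x' \in q).
Proof.
rewrite /proj mem_pmap; apply/mapP/idP => [[x hx /esym/unb_some ex]|h].
  by rewrite -ex.
by exists (barc x'); rewrite ?unb_barc.
Qed.

Lemma proj_cat q1 q2 : proj (q1 ++ q2) = proj q1 ++ proj q2.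
Proof. exact: pmap_cat. Qed.

Lemma proj_C q : all isC q -> proj q = [::].
Proof.
elim: q => [|x q IH] // hall; move: (hall) => /= /andP[hx hq].
by rewrite /proj /= unb_C // -/(proj q) IH.
Qed.

Lemma Cwalk v w : connect (contr_rel ends C) v w ->
  exists cw, [/\ dwalk ends v cw, vend v cw = w & all isC cw].
Proof.
move/connectP => [p hp ->]; elim: p v hp => [|y p IH] v /=; first by exists [::].
move=> /andP[hr hp]; have [cw [h1 h2 h3]] := IH _ hp.
move: hr; rewrite /contr_rel => /existsP[e /andP[he /orP[/eqP H|/eqP H]]].
  exists ((e, true) :: cw); rewrite /= /dsrc /ddst /= H /= eqxx /= h1 h2.
  by rewrite /isC he.
exists ((e, false) :: cw); rewrite /= /dsrc /ddst /= H /= eqxx /= h1 h2.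
by rewrite /isC he.
Qed.

Lemma build_walk d p' : forall v, v \in VS -> dwalk ends' (pi v) p' -> d \in VS ->
  last (pi v) [seq dst' x | x <- p'] = pi d ->
  exists w, [/\ dwalk ends v w, vend v w = d, all nonhuge w & proj w = p'].
Proof.
elim: p' => [|x' p IH] v hv /=.
  move=> _ hd hpd; have /(hpi hv hd) hc := hpd.
  have [cw [h1 h2 h3]] := Cwalk hc.
  exists cw; split => //; last exact: proj_C.
  by apply: sub_all h3 => y hy; rewrite /nonhuge hy orbT.
move=> /andP[/eqP hs hw] hd hl.
have [hsv hdv] := barc_VS x'; have [e1 e2] := ends_barc x'.
have /(hpi hv hsv) hc : pi v = pi (src (barc x')) by rewrite -e1 hs.
have [cw [h1 h2 h3]] := Cwalk hc.
have hw2 : dwalk ends' (pi (dst (barc x'))) p by rewrite -e2.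
have hl2 : last (pi (dst (barc x'))) [seq dst' x | x <- p] = pi d by rewrite -e2.
have [wr [k1 k2 k3 k4]] := IH _ hdv hw2 hd hl2.
exists (cw ++ barc x' :: wr); split.
- by rewrite dwalk_cat h1 h2 /= eqxx k1.
- by rewrite vend_cat h2.
- rewrite all_cat /= k3 andbT /nonhuge unb_barc /= andbT.
  by apply: sub_all h3 => y hy; rewrite /nonhuge hy orbT.
- by rewrite proj_cat proj_C // /proj /= unb_barc -/(proj wr) k4.
Qed.

Definition cand o d p' q := [/\ is_route ends o d q, all nonhuge q & proj q = p'].

Lemma cand_ex o d p' : o \in VS -> d \in VS -> is_route ends' (pi o) (pi d) p' ->
  exists q, cand o d p' q.
Proof.
move=> ho hd /and3P[hw' hl' hu'].
have [w [h1 h2 h3 h4]] := build_walk ho hw' hd (eqP hl').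
pose P w := all nonhuge w /\ proj w = p'.
have hP : forall w1 w2 w3, dwalk ends o (w1 ++ w2 ++ w3) -> w2 != [::] ->
    vend (vend o w1) w2 = vend o w1 -> P (w1 ++ w2 ++ w3) -> P (w1 ++ w3).
  move=> w1 w2 w3 hw hne hcl [ha hp].
  have ha' : all nonhuge (w1 ++ w3) by move: ha; rewrite !all_cat => /and3P[-> _ ->].
  split => //.
  move: hw; rewrite !dwalk_cat => /and3P[k1 k2 k3].
  move: ha; rewrite !all_cat => /and3P[a1 a2 a3].
  have [_ l1] := proj_walk k1 a1.
  have [_ l2] := proj_walk k2 a2.
  rewrite hcl in l2.
  suff e2 : proj w2 = [::] by rewrite proj_cat -hp !proj_cat e2.
  case E2: (proj w2) l2 => [|b B] //= l2.
  have hu2 : uniq ((pi o :: [seq dst' x | x <- proj w1]) ++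
                   [seq dst' x | x <- (b :: B) ++ proj w3]).
    by rewrite cat_cons -map_cat -E2 -!proj_cat hp.
  move: hu2; rewrite cat_uniq => /and3P[_ hn _].
  case/negP: hn; apply/hasP; exists (pi (vend o w1)).
    rewrite map_cat mem_cat -l2; apply/orP; left.
    exact: (mem_last (dst' b) [seq dst' x | x <- B]).
  by rewrite -l1 mem_last.
have [r [hr [pr1 pr2] _]] := @simplify V E ends P o w hP h1 (conj h3 h4).
by exists r; split => //; rewrite -h2.
Qed.

Definition Wn (q : seq (darc E)) : nat := \sum_(x <- q | isC x) 2 ^ enum_rank x.

Lemma Wn_ord q : uniq q ->
  Wn q = \sum_(i < #|darc E|) (if (enum_val i \in q) && isC (enum_val i) then 2 ^ i else 0).
Proof.
move=> hu; rewrite /Wn big_mkcond big_uniq //= big_mkcond /=.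
rewrite (reindex (@enum_val (darc E) predT)) /=; last first.
  by apply: onW_bij; apply: enum_val_bij.
apply: eq_bigr => i _; rewrite enum_valK.
by case: (_ \in _); case: (isC _).
Qed.

Lemma Wn_inj q1 q2 : uniq q1 -> uniq q2 -> Wn q1 = Wn q2 ->
  forall x, isC x -> (x \in q1) = (x \in q2).
Proof.
move=> u1 u2; rewrite !Wn_ord // => /pow2_inj h x hx.
by have := h (enum_rank x); rewrite /= enum_rankK hx !andbT.
Qed.

Lemma cand_unique o d p' q1 q2 : cand o d p' q1 -> cand o d p' q2 ->
  Wn q1 = Wn q2 -> q1 = q2.
Proof.
move=> [r1 a1 p1] [r2 a2 p2] hW.
have u1 := route_uniq r1; have u2 := route_uniq r2.
case/and3P: r1 => w1 _ uu1; case/and3P: r2 => w2 _ uu2.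
apply: (route_eq_mem w1 w2 uu1 uu2) => y.
case E1: (unb y) => [y'|].
  by rewrite (unb_some E1) -!mem_proj p1 p2.
case: (boolP (isC y)) => hy; first exact: Wn_inj.
have hn : ~~ nonhuge y by rewrite /nonhuge E1 (negbTE hy).
apply/idP/idP => hin.
  by move/allP: a1 => /(_ _ hin); rewrite (negbTE hn).
by move/allP: a2 => /(_ _ hin); rewrite (negbTE hn).
Qed.

Local Open Scope classical_set_scope.
Definition lift o d p' : seq (darc E) :=
  xget [::] [set q | cand o d p' q /\ forall q', cand o d p' q' -> (Wn q <= Wn q')%N].

Lemma lift_spec o d p' : o \in VS -> d \in VS -> is_route ends' (pi o) (pi d) p' ->
  cand o d p' (lift o d p') /\ forall q', cand o d p' q' -> (Wn (lift o d p') <= Wn q')%N.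
Proof.
move=> ho hd hr; have := xgetPex [::] (argmin_ex Wn (cand_ex ho hd hr)).
by [].
Qed.
Local Close Scope classical_set_scope.

Import numFieldNormedType.Exports.
Local Open Scope ring_scope.

Variable R : realType.
Local Notation U := (measurableTypeR R).
Variables (a b : R) (od' : R -> V' * V') (c' : R -> darc E' -> R -> R).
Variables (s1 s2 : R -> seq (darc E')).
Variables (AS : {set V * V}) (l0 : V * V) (L : {set V * V}) (L' : {set V' * V'}).
Hypothesis hAS : AS \subset L.
Hypothesis hASV : forall l, l \in AS -> (l.1 \in VS) && (l.2 \in VS).
Hypothesis hL' : L' = imset (fun l : V * V => (pi l.1, pi l.2)) (mem AS).
Hypothesis hod' : od_partition L' a b od'.
Hypothesis hc' : cost_assignment a b c'.
Hypothesis hs1 : strict_equilibrium ends' a b od' c' s1.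
Hypothesis hs2 : strict_equilibrium ends' a b od' c' s2.

Local Open Scope classical_set_scope.
Definition odG (l' : V' * V') : V * V :=
  xget l0 [set l | l \in AS /\ (pi l.1, pi l.2) = l'].
Local Close Scope classical_set_scope.

Definition odf u := odG (od' u).

Lemma odf_spec u : users a b u -> odf u \in AS /\ (pi (odf u).1, pi (odf u).2) = od' u.
Proof.
move=> hu; have := hod'.1 u hu; rewrite hL' => /imsetP[l hl el].
have := @xgetPex _ l0 [set l | l \in AS /\ (pi l.1, pi l.2) = od' u]%classic.
by apply; exists l; split.
Qed.

Definition sG (s : R -> seq (darc E')) u := lift (odf u).1 (odf u).2 (s u).

Lemma sG_spec s u : strategy_profile ends' a b od' s -> users a b u ->
  cand (odf u).1 (odf u).2 (s u) (sG s u) /\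
  forall q', cand (odf u).1 (odf u).2 (s u) q' -> (Wn (sG s u) <= Wn q')%N.
Proof.
move=> [hr _] hu; have [h1 h2] := odf_spec hu.
have /andP[v1 v2] := hASV h1.
apply: lift_spec => //; have := hr u hu; by rewrite -h2.
Qed.

Lemma flow_barc s x' : strategy_profile ends' a b od' s ->
  flow a b (sG s) (barc x') = flow a b s x'.
Proof.
move=> hs; rewrite /flow; congr (fine (lebesgue_measure _)).
apply/funext => u; apply/propext; split => -[hu h]; split => //.
  by have [[_ _ <-] _] := sG_spec hs hu; rewrite mem_proj.
by have [[_ _ hp] _] := sG_spec hs hu; rewrite -mem_proj hp.
Qed.

Local Open Scope classical_set_scope.
Lemma users_meas : measurable (users a b : set U).
Proof.
have -> : (users a b : set U) = [set` `[a, b]%R].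
  by apply/funext => u; apply/propext; rewrite /users /= in_itv.
exact: measurable_itv.
Qed.

Lemma odf_partition : od_partition L a b odf.
Proof.
split.
  move=> u hu; have [h1 _] := odf_spec hu; exact: (fintype.subsetP hAS).
move=> l.
have -> : ([set u | users a b u /\ odf u = l] : set U) =
  \big[setU/set0]_(l' <- enum [pred x : (V' * V')%type | true] | odG l' == l)
     ([set u | users a b u /\ od' u = l'] : set U).
  rewrite -bigcup_seq_cond; apply/funext => u; apply/propext; split.
    move=> [hu hl]; exists (od' u) => //=.
    by rewrite mem_enum /= -hl /odf eqxx.
  by move=> [l' /= /andP[_ /eqP hl] [hu ho]]; split => //; rewrite /odf ho.
apply: bigsetU_measurable => l' _; exact: hod'.2.
Qed.

Definition SS := allseqs (darc E') #|darc E'|.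

Lemma route_in_SS o d p : is_route ends' o d p -> p \in SS.
Proof. by move=> /route_size; apply: mem_allseqs. Qed.

Lemma sG_profile s : strategy_profile ends' a b od' s ->
  strategy_profile ends a b odf (sG s).
Proof.
move=> hs; split.
  by move=> u hu; have [[h _ _] _] := sG_spec hs hu.
move=> p.
pose PS2 := [seq (l', p') | l' <- enum [pred x : (V' * V')%type | true], p' <- SS].
have -> : ([set u | users a b u /\ sG s u = p] : set U) =
  \big[setU/set0]_(ij <- PS2 | lift (odG ij.1).1 (odG ij.1).2 ij.2 == p)
     (([set u | users a b u /\ od' u = ij.1] : set U) `&`
      [set u | users a b u /\ s u = ij.2])%classic.
  rewrite -bigcup_seq_cond; apply/funext => u; apply/propext; split.
    move=> [hu hp]; exists (od' u, s u) => //=.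
    rewrite -hp eqxx andbT; apply/allpairsP; exists (od' u, s u); split => //.
      by rewrite mem_enum.
    exact: (route_in_SS (hs.1 u hu)).
  move=> [[l' p'] /= /andP[_ /eqP hl] [[hu ho] [_ hp]]]; split => //.
  by rewrite /sG /odf ho hp.
apply: bigsetU_measurable => ij _; apply: measurableI.
  exact: hod'.2.
exact: hs.2.
Qed.

Lemma flow_ge0 (E0 : finType) (s : R -> seq (darc E0)) x : 0 <= flow a b s x.
Proof. by rewrite /flow fine_ge0 // measure_ge0. Qed.

Definition costp (f : darc E' -> R) u (r : seq (darc E')) : R :=
  \sum_(x' <- r) c' u x' (f x').
Definition dd f r s (u : U) : R := costp f u r - costp f u s.
Definition hh f r s (u : U) : R :=
  `|dd f r s u| + \1_(users a b `&` [set v | dd f r s v = 0]) u.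
Definition PS := [seq (r, s) | r <- SS, s <- SS].
Definition gg (u : U) : R := foldr (fun rs acc =>
  Order.min (Order.min (hh (flow a b s1) rs.1 rs.2 u) (hh (flow a b s2) rs.1 rs.2 u)) acc)
  1 PS.

Lemma costp_meas f : (forall x, 0 <= f x) -> forall r,
  measurable_fun (users a b : set U) (fun u : U => costp f u r).
Proof.
move=> hf r; rewrite /costp; apply: measurable_sum => x'.
have [_ _ _ h4] := hc'; exact: h4.
Qed.

Lemma hh_meas f r s : (forall x, 0 <= f x) ->
  measurable_fun (users a b : set U) (hh f r s).
Proof.
move=> hf.
have hd : measurable_fun (users a b : set U) (dd f r s).
  exact: measurable_realfun.measurable_funB (costp_meas hf r) (costp_meas hf s).
apply: measurable_realfun.measurable_funD.
  exact: measurableT_comp (@measurable_realfun.normr_measurable R setT) hd.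
apply: measurable_realfun.measurable_indic.
exact: (hd users_meas [set 0] (measurable_set1 0)).
Qed.

Lemma gg_meas : measurable_fun (users a b : set U) gg.
Proof.
rewrite /gg; elim: PS => [|rs l IH] /=; first exact: measurable_cst.
apply: measurable_realfun.measurable_minr => //.
apply: measurable_realfun.measurable_minr; apply: hh_meas; exact: flow_ge0.
Qed.

Lemma gg_le1 u : gg u <= 1.
Proof.
rewrite /gg; elim: PS => [|rs l IH] //=.
by rewrite ge_min IH orbT.
Qed.

Lemma hh_pos f r s u : users a b u -> 0 < hh f r s u.
Proof.
move=> hu; rewrite /hh indicE.
have [h|h] := eqVneq (dd f r s u) 0.
  have -> : u \in (users a b `&` [set v | dd f r s v = 0]) by rewrite in_setE.
  by rewrite h normr0 add0r ltr0n.
apply: (lt_le_trans (y := `|dd f r s u|)); first by rewrite normr_gt0.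
by rewrite lerDl ler0n.
Qed.

Lemma gg_pos u : users a b u -> 0 < gg u.
Proof.
move=> hu; rewrite /gg; elim: PS => [|rs l IH] /=; first exact: ltr01.
by rewrite !lt_min !hh_pos.
Qed.

Lemma gg_le u rs : rs \in PS ->
  gg u <= hh (flow a b s1) rs.1 rs.2 u /\ gg u <= hh (flow a b s2) rs.1 rs.2 u.
Proof.
rewrite /gg; elim: PS => [|rs' l IH] //=; rewrite in_cons => /orP[/eqP<-|h].
  by rewrite !ge_min !lexx /= orbT.
have [h1 h2] := IH h.
by rewrite !ge_min h1 h2 !orbT.
Qed.

Lemma gap f u r s : users a b u -> r \in SS -> s \in SS ->
  (f = flow a b s1 \/ f = flow a b s2) ->
  costp f u s < costp f u r -> gg u <= costp f u r - costp f u s.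
Proof.
move=> hu hr hs hf hlt.
have hrs : (r, s) \in PS by apply/allpairsP; exists (r, s).
have hpos : 0 < dd f r s u by rewrite /dd subr_gt0.
have -> : costp f u r - costp f u s = hh f r s u.
  rewrite /hh indicE.
  have -> : u \in (users a b `&` [set v | dd f r s v = 0]) = false.
    apply/negbTE/negP; rewrite in_setE => -[_ h0].
    by move: hpos; rewrite h0 ltxx.
  by rewrite addr0 gtr0_norm.
have [h1 h2] := gg_le u hrs.
by case: hf => ->.
Qed.

Definition Kp : R := (#|darc E'|)%:R.
Definition Wm : nat := (\sum_(x : darc E) 2 ^ enum_rank x)%N.
Definition Tm : R := \sum_(x : darc E) (flow a b (sG s1) x + flow a b (sG s2) x).
Definition del (u : U) : R := gg u * (2 * (Kp + 1))^-1.
Definition eta (u : U) : R := del u * (2 * (Wm%:R + 1))^-1.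
Definition eps (u : U) : R := eta u * (2 * (Tm + 1))^-1.
Definition MM (u : U) : R :=
  \sum_(x' : darc E') (c' u x' (flow a b s1 x') + c' u x' (flow a b s2 x')) + 2.

Definition cG (u : R) (x : darc E) (t : R) : R :=
  if unb x is Some x' then c' u x' t + del u
  else if isC x then eta u * (2 ^ enum_rank x)%:R + eps u * t
  else MM u + t.

Lemma Kp_ge0 : 0 <= Kp. Proof. exact: ler0n. Qed.
Lemma Tm_ge0 : 0 <= Tm.
Proof. by apply: sumr_ge0 => x _; apply: addr_ge0; apply: flow_ge0. Qed.

Lemma consts_pos u : users a b u -> [/\ 0 < del u, 0 < eta u & 0 < eps u].
Proof.
move=> hu; have hg := gg_pos hu.
have hd : 0 < del u.
  by rewrite /del mulr_gt0 // invr_gt0 mulr_gt0 // ltr_wpDl // Kp_ge0.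
have he : 0 < eta u.
  by rewrite /eta mulr_gt0 // invr_gt0 mulr_gt0 // ltr_wpDl // ler0n.
split => //.
by rewrite /eps mulr_gt0 // invr_gt0 mulr_gt0 // ltr_wpDl // Tm_ge0.
Qed.

Lemma numfacts u : users a b u ->
  [/\ del u * Kp + eta u * Wm%:R + eps u * Tm < gg u,
      eta u * Wm%:R + eps u * Tm < del u &
      eps u * Tm < eta u].
Proof.
move=> hu; have hg := gg_pos hu; have [hd he hp] := consts_pos hu.
have hK := Kp_ge0; have hT := Tm_ge0; have hW : 0 <= (Wm%:R : R) := ler0n _ _.
have ed : del u * (2 * (Kp + 1)) = gg u.
  by rewrite /del -mulrA mulVf ?mulr1 // mulf_neq0 // lt0r_neq0 // ltr_wpDl.
have ee : eta u * (2 * (Wm%:R + 1)) = del u.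
  by rewrite /eta -mulrA mulVf ?mulr1 // mulf_neq0 // lt0r_neq0 // ltr_wpDl.
have ep : eps u * (2 * (Tm + 1)) = eta u.
  by rewrite /eps -mulrA mulVf ?mulr1 // mulf_neq0 // lt0r_neq0 // ltr_wpDl.
have h3 : eps u * Tm < eta u by nra.
have h2 : eta u * Wm%:R + eps u * Tm < del u by nra.
split => //; nra.
Qed.

Lemma MM_ge0 u : users a b u -> 0 <= MM u.
Proof.
move=> hu; have [h1 _ _ _] := hc'.
apply: addr_ge0 => //; apply: sumr_ge0 => x' _.
by apply: addr_ge0; apply: h1 => //; apply: flow_ge0.
Qed.

Lemma aff_cont (k e : R) : continuous (fun t : R => k + e * t).
Proof.
move=> t; apply: continuousD; first exact: cst_continuous.
apply: continuousM; first exact: cst_continuous.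
exact: cvg_id.
Qed.

Lemma cstD_cont (k : R) : continuous (fun t : R => k + t).
Proof.
move=> t; apply: continuousD; first exact: cst_continuous.
exact: cvg_id.
Qed.

Lemma cG_assign : cost_assignment a b cG.
Proof.
have [h1 h2 h3 h4] := hc'.
split.
- move=> u x t hu ht; have [hd he hp] := consts_pos hu; rewrite /cG.
  case: (unb x) => [x'|]; first by apply: addr_ge0 => //; [exact: h1 | exact: ltW].
  case: (isC x).
    by apply: addr_ge0; apply: mulr_ge0 => //; exact: ltW.
  by apply: addr_ge0 => //; exact: MM_ge0.
- move=> u x hu; rewrite /cG; case: (unb x) => [x'|].
    apply: within_continuousD; first exact: h2.
    apply: continuous_subspaceT; exact: cst_continuous.
  apply: continuous_subspaceT.
  case: (isC x) => /=; first exact: aff_cont.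
  exact: cstD_cont.
- move=> u x t s hu ht hts; have [hd he hp] := consts_pos hu; rewrite /cG.
  case: (unb x) => [x'|]; first by rewrite ltrD2r; exact: h3.
  case: (isC x); first by rewrite ltrD2l ltr_pM2l.
  by rewrite ltrD2l.
- move=> x t ht; rewrite /cG; case: (unb x) => [x'|].
    apply: measurable_realfun.measurable_funD; first exact: h4.
    apply: measurable_realfun.measurable_funM; last exact: measurable_cst.
    exact: gg_meas.
  have hdm : measurable_fun (users a b : set U) del.
    by apply: measurable_realfun.measurable_funM; [exact: gg_meas | exact: measurable_cst].
  have hem : measurable_fun (users a b : set U) eta.
    by apply: measurable_realfun.measurable_funM; [exact: hdm | exact: measurable_cst].
  have hpm : measurable_fun (users a b : set U) eps.
    by apply: measurable_realfun.measurable_funM; [exact: hem | exact: measurable_cst].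
  case: (isC x).
    apply: measurable_realfun.measurable_funD.
      by apply: measurable_realfun.measurable_funM; [exact: hem | exact: measurable_cst].
    by apply: measurable_realfun.measurable_funM; [exact: hpm | exact: measurable_cst].
  apply: measurable_realfun.measurable_funD; last exact: measurable_cst.
  apply: measurable_realfun.measurable_funD; last exact: measurable_cst.
  apply: measurable_sum => x'.
  apply: measurable_realfun.measurable_funD; apply: h4; exact: flow_ge0.
Qed.

Lemma cost_split (F : darc E -> R) u q : all nonhuge q ->
  \sum_(x <- q) cG u x (F x) =
  \sum_(x' <- proj q) c' u x' (F (barc x')) + del u * (size (proj q))%:R
  + eta u * (Wn q)%:R + eps u * \sum_(x <- q | isC x) F x.
Proof.
elim: q => [|x q IH] /=.
  by rewrite /proj /Wn !big_nil /= !mulr0 !addr0.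
move=> /andP[hn hq]; rewrite big_cons IH //.
rewrite /proj /=; case E1: (unb x) => [x'|].
  have hc : ~~ isC x by apply/negP => /unb_C; rewrite E1.
  rewrite /cG E1 /=.
  have -> : Wn (x :: q) = Wn q by rewrite /Wn big_cons (negbTE hc).
  have -> : \sum_(x0 <- x :: q | isC x0) F x0 = \sum_(x0 <- q | isC x0) F x0.
    by rewrite big_cons (negbTE hc).
  rewrite big_cons /= -addn1 natrD -(unb_some E1).
  ring.
have hc : isC x by move: hn; rewrite /nonhuge E1.
rewrite /cG E1 hc /=.
have -> : Wn (x :: q) = (2 ^ enum_rank x + Wn q)%N by rewrite /Wn big_cons hc.
rewrite big_cons hc natrD.
ring.
Qed.

Lemma uniq_sum_le (T : finType) (G : T -> R) (P : pred T) q :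
  uniq q -> (forall x, 0 <= G x) -> \sum_(x <- q | P x) G x <= \sum_x G x.
Proof.
move=> hu hG; rewrite big_mkcond big_uniq //= big_mkcond /=.
apply: ler_sum => x _; case: (x \in q); case: (P x) => //=.
Qed.

Lemma Wn_le q : uniq q -> (Wn q <= Wm)%N.
Proof.
move=> hu; rewrite /Wn /Wm big_mkcond big_uniq //= big_mkcond /=.
apply: leq_sum => x _; case: (x \in q); case: (isC x) => //=.
Qed.

Lemma costp_subseq f u r w : users a b u -> (forall x, 0 <= f x) -> subseq r w ->
  costp f u r <= costp f u w.
Proof.
move=> hu hf; have [c0 _ _ _] := hc'.
elim: w r => [|y w IH] r.
  by rewrite subseq0 => /eqP ->.
case: r => [|x r] h.
  rewrite /costp big_nil; apply: sumr_ge0 => z _; exact: c0.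
move: h => /=; case: eqP => [<-|_] h.
  by rewrite /costp !big_cons lerD2l; apply: IH.
rewrite /costp [X in _ <= X]big_cons; apply: ler_wpDl; first exact: c0.
exact: IH.
Qed.

Lemma eqG s : s = s1 \/ s = s2 -> equilibrium ends a b odf cG (sG s).
Proof.
move=> hs.
have hseq : strict_equilibrium ends' a b od' c' s by case: hs => ->.
have [[hsp hopt] hstr] := hseq.
split; first exact: sG_profile.
move=> u hu q hq.
have [[hq0 hq0a hq0p] hmin] := sG_spec hsp hu.
move: hq0 hq0a hq0p hmin.
set o := (odf u).1; set d := (odf u).2; set q0 := sG s u.
move=> hq0 hq0a hq0p hmin.
set F := flow a b (sG s).
set f := flow a b s.
have hFb : forall x', F (barc x') = f x' by move=> x'; exact: flow_barc.
have hf0 : forall x', 0 <= f x' by move=> x'; exact: flow_ge0.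
have hF0 : forall x, 0 <= F x by move=> x; exact: flow_ge0.
have [hd he hp] := consts_pos hu.
have [N1 N2 N3] := numfacts hu.
have hg1 := gg_le1 u.
have [c0 _ _ _] := hc'.
have hc0 : forall x t, 0 <= t -> 0 <= c' u x t by move=> x t ht; exact: c0.
have [cGa _ _ _] := cG_assign.
have hcG0 : forall x, 0 <= cG u x (F x) by move=> x; exact: cGa.
have hT := Tm_ge0.
rewrite /route_cost -/F.
have Lsplit := cost_split F u hq0a.
rewrite hq0p in Lsplit.
have hcp : forall p, \sum_(x' <- p) c' u x' (F (barc x')) = costp f u p.
  by move=> p; apply: eq_bigr => x' _; rewrite hFb.
rewrite hcp in Lsplit.
have hp'r : is_route ends' (od' u).1 (od' u).2 (s u) := hsp.1 u hu.
have [_ hod] := odf_spec hu.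
have hsz : (size (s u))%:R <= Kp by rewrite ler_nat; exact: route_size hp'r.
have hW0 : ((Wn q0)%:R : R) <= Wm%:R by rewrite ler_nat; apply: Wn_le; exact: route_uniq hq0.
have hT0 : \sum_(x <- q0 | isC x) F x <= Tm.
  apply: le_trans (uniq_sum_le (G := F) isC (route_uniq hq0) hF0) _.
  rewrite /Tm; apply: ler_sum => x _.
  by case: hs => hs'; rewrite /F hs'; [rewrite lerDl | rewrite lerDr]; apply: flow_ge0.
set Lc := \sum_(x <- q0) cG u x (F x).
have hTq0 : 0 <= \sum_(x <- q0 | isC x) F x by apply: sumr_ge0.
have hLup : Lc <= costp f u (s u) + (del u * Kp + eta u * Wm%:R + eps u * Tm).
  rewrite /Lc Lsplit; rewrite -!addrA lerD2l.
  apply: lerD; first by apply: ler_wpM2l => //; exact: ltW.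
  apply: lerD; first by apply: ler_wpM2l => //; exact: ltW.
  by apply: ler_wpM2l => //; exact: ltW.
have hLup2 : Lc <= costp f u (s u) + del u * (size (s u))%:R + (eta u * Wm%:R + eps u * Tm).
  rewrite /Lc Lsplit; rewrite -!addrA !lerD2l.
  apply: lerD; first by apply: ler_wpM2l => //; exact: ltW.
  by apply: ler_wpM2l => //; exact: ltW.
have hcostp_le : costp f u (s u) <=
    \sum_(x' : darc E') (c' u x' (flow a b s1 x') + c' u x' (flow a b s2 x')).
  apply: le_trans (uniq_sum_le (G := fun x' => c' u x' (f x')) xpredT (route_uniq hp'r) _) _.
    by move=> x'; apply: hc0.
  apply: ler_sum => x' _.
  case: hs => hs'; rewrite /f hs'; [rewrite lerDl | rewrite lerDr]; apply: hc0; exact: flow_ge0.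
case: (boolP (all nonhuge q)) => hqa; last first.
  have [x hx hxn] := allPn hqa.
  have hx1 : unb x = None by move: hxn; rewrite /nonhuge; case: (unb x).
  have hx2 : ~~ isC x by move: hxn; rewrite /nonhuge hx1 /=.
  have hM : MM u <= \sum_(y <- q) cG u y (F y).
    rewrite (bigD1_seq x) //=; last exact: route_uniq hq.
    apply: ler_wpDr; first by apply: sumr_ge0 => y _.
    by rewrite /cG hx1 (negbTE hx2) lerDl.
  apply: le_trans hM; apply: le_trans hLup _.
  rewrite /MM; lra.
have /and3P[qw ql qu] := hq.
have [hw' hl'] := proj_walk qw hqa.
rewrite (eqP ql) in hl'.
have hP : forall w1 w2 w3, dwalk ends' (pi o) (w1 ++ w2 ++ w3) -> w2 != [::] ->
    last (last (pi o) [seq ddst ends' x | x <- w1]) [seq ddst ends' x | x <- w2] =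
    last (pi o) [seq ddst ends' x | x <- w1] ->
    subseq (w1 ++ w2 ++ w3) (proj q) -> subseq (w1 ++ w3) (proj q).
  move=> w1 w2 w3 _ _ _; apply: subseq_trans.
  exact: cat_subseq (subseq_refl w1) (suffix_subseq w2 w3).
have [r' [hr' hsub hsz']] := @simplify V' E' ends' (fun r => subseq r (proj q)) (pi o) (proj q) hP hw' (subseq_refl _).
rewrite hl' in hr'.
have hr'2 : is_route ends' (od' u).1 (od' u).2 r' by rewrite -hod.
have cq := cost_split F u hqa; rewrite hcp in cq.
have hTq : 0 <= \sum_(x <- q | isC x) F x by apply: sumr_ge0.
have hWq : 0 <= ((Wn q)%:R : R) := ler0n _ _.
have hlow : costp f u (proj q) + del u * (size (proj q))%:R <= \sum_(x <- q) cG u x (F x).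
  rewrite cq -addrA lerDl; apply: addr_ge0; apply: mulr_ge0 => //; exact: ltW.
have hsubc := costp_subseq hu hf0 hsub.
case: (eqVneq r' (s u)) => hr's; last first.
  have hlt : costp f u (s u) < costp f u r'.
    rewrite ltNge; apply/negP => hle; move/eqP: hr's; apply.
    exact: hstr u hu r' hr'2 hle.
  have hff : f = flow a b s1 \/ f = flow a b s2.
    by rewrite /f; case: hs => ->; [left|right].
  have hgap := gap hu (route_in_SS hr'2) (route_in_SS hp'r) hff hlt.
  apply: le_trans hLup _; apply: le_trans hlow.
  apply: le_trans (ler_wpDr _ hsubc); last first.
    by apply: mulr_ge0; [exact: ltW | exact: ler0n].
  rewrite -lerBrDl; apply: ltW; apply: lt_le_trans (N1) hgap.
subst r'.
case: hsz' => [hpq|hlt].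
  have hcq : cand o d (s u) q by split => //; rewrite hpq.
  have hmq := hmin q hcq.
  case: (eqVneq (Wn q0) (Wn q)) => hWe.
    by rewrite /Lc (cand_unique (And3 hq0 hq0a hq0p) hcq hWe).
  have hWlt : ((Wn q0)%:R : R) + 1 <= (Wn q)%:R.
    by rewrite natr1 ler_nat ltn_neqAle hWe hmq.
  rewrite cq /Lc Lsplit -hpq.
  have : eps u * \sum_(x <- q0 | isC x) F x <= eps u * Tm.
    by apply: ler_wpM2l => //; exact: ltW.
  have : eta u * ((Wn q0)%:R + 1) <= eta u * (Wn q)%:R.
    by apply: ler_wpM2l => //; exact: ltW.
  have : 0 <= eps u * \sum_(x <- q | isC x) F x by apply: mulr_ge0 => //; exact: ltW.
  nra.
have hsl : ((size (s u))%:R : R) + 1 <= (size (proj q))%:R.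
  by rewrite natr1 ler_nat.
apply: le_trans hLup2 _; apply: le_trans hlow.
have : del u * ((size (s u))%:R + 1) <= del u * (size (proj q))%:R.
  by apply: ler_wpM2l => //; exact: ltW.
nra.
Qed.

Lemma not_unique : (exists x, flow a b s1 x <> flow a b s2 x) ->
  ~ uniqueness_property ends L a b.
Proof.
move=> [x hx] hU; apply: hx.
rewrite -(flow_barc x hs1.1.1) -(flow_barc x hs2.1.1).
apply: (hU odf cG odf_partition cG_assign (sG s1) (sG s2)); apply: eqG; by [left|right].
Qed.

End Lift.

Theorem mainTheorem11 (R : realType) (a b : R)
  (V E : finType) (ends : E -> V * V) (L : {set V * V})
  (V' E' : finType) (ends' : E' -> V' * V') (L' : {set V' * V'}) :
  simple_demand L -> simple_demand L' ->
  is_minor ends L ends' L' ->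
  (exists (od : R -> V' * V') (c : R -> darc E' -> R -> R)
          (sigma1 sigma2 : R -> seq (darc E')) (x : darc E'),
      [/\ od_partition L' a b od, cost_assignment a b c,
          strict_equilibrium ends' a b od c sigma1,
          strict_equilibrium ends' a b od c sigma2 &
          flow a b sigma1 x <> flow a b sigma2 x]) ->
  ~ uniqueness_property ends L a b.
Proof.
move=> _ _ [VS [ES [AS [C [pi [beta [[hES hAS hASV hC] [[hpi _] [[hbinj _ hbES hends'] [_ hL']]]]]]]]]].
move=> [od [c [sigma1 [sigma2 [x [hod hc hs1 hs2 hx]]]]]].
have [u0 hu0] : exists u, users a b u.
  apply: contrapT => hno; apply: hx; rewrite /flow.
  have e1 : forall s : R -> seq (darc E'),
      [set u | users a b u /\ x \in s u]%classic = set0.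
    move=> s; apply/funext => u; apply/propext; split; last by [].
    by move=> [hu _]; apply: hno; exists u.
  by rewrite !e1.
have := (hod.1 u0 hu0); rewrite hL' => /imsetP[l0 _ _].
apply: (not_unique hES hC hpi hbinj hbES hends' l0 hAS hASV hL' hod hc hs1 hs2).
by exists x.
Qed.
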